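(* Let $(S,d)$ be a complete metric space with a Hausdorff topology $\sigma$ compatible with $d$, let $\phi,\phi_\epsilon:S\to(-\infty,+\infty]$ ($\epsilon>0$) and $\epsilon(\tau)>0$ with $\epsilon(\tau)\to0$ as $\tau\to0$, and suppose $\phi,(\phi_\epsilon)$ satisfy (A1), (A2), and (A3) with this choice $\epsilon(\tau)$ (see context). Let $r(\epsilon)>0$ with $r(\epsilon)\uparrow+\infty$ as $\epsilon\to0$, fix $u_{\star\star}\in S$, and set $\tilde\phi_\epsilon=\phi_\epsilon+\mathbb{I}_{\{d(u_{\star\star},\cdot)\le r(\epsilon)\}}$, where $\mathbb{I}_V=0$ on $V$ and $+\infty$ on $S\setminus V$. Then $\phi,(\tilde\phi_\epsilon)_{\epsilon>0}$ also satisfy (A1), (A2), and (A3) with the same choice $\epsilon(\tau)$.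
   Context: $\sigma$ compatible with $d$: if $u_n\stackrel{\sigma}{\rightharpoonup}u$, $v_n\stackrel{\sigma}{\rightharpoonup}v$ then $\liminf_n d(u_n,v_n)\ge d(u,v)$; if $d(u_n,v_n)\to0$ and $u_n\stackrel{\sigma}{\rightharpoonup}u$ then $v_n\stackrel{\sigma}{\rightharpoonup}u$. Local slope $|\partial\phi|(v)=\limsup_{w\stackrel{d}{\to}v}\frac{(\phi(v)-\phi(w))^+}{d(v,w)}$; relaxed slope $|\partial^-\phi|(u)=\inf\{\liminf_n|\partial\phi|(u_n): u_n\stackrel{\sigma}{\rightharpoonup}u,\ \sup_n\{d(u_n,u),\phi(u_n)\}<+\infty\}$; $\mathcal{Y}_\tau f(u)=\inf_{v}\{f(v)+\frac1{2\tau}d^2(v,u)\}$. For a family $(f_\epsilon)$: (A1) there exist $A,B>0,u_\star$ with $f_\epsilon\ge-A-Bd^2(\cdot,u_\star)$ for all $\epsilon$, and for $\epsilon_n\to0$, $\sup_{n,m}\{f_{\epsilon_n}(u_n),d(u_n,u_m)\}<\infty$ implies a $\sigma$-convergent subsequence; (A2) for $\epsilon_n\to0$, $\sup_{n,m}d(u_n,u_m)<\infty$ and $u_n\stackrel{\sigma}{\rightharpoonup}u$ imply $\liminf_n f_{\epsilon_n}(u_n)\ge\phi(u)$; (A3) for all $u_\tau\stackrel{\sigma}{\rightharpoonup}u$ with $\sup_\tau\{f_{\epsilon(\tau)}(u_\tau),d(u_\tau,u)\}<\infty$, $\liminf_{\tau\to0}\frac{f_{\epsilon(\tau)}(u_\tau)-\mathcal{Y}_\tau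 f_{\epsilon(\tau)}(u_\tau)}{\tau}\ge\frac12|\partial^-\phi|^2(u)$. *)

(* Defs.v *)
From HB Require Import structures.
From mathcomp Require Import all_boot all_order all_algebra.
From mathcomp Require Import all_classical all_reals all_analysis.
Set Implicit Arguments. Unset Strict Implicit. Unset Printing Implicit Defensive.
Import Order.TTheory GRing.Theory Num.Theory numFieldNormedType.Exports.
Local Open Scope classical_set_scope.
Local Open Scope ring_scope.

Section Defs.
Context {R : realType} {S : topologicalType}.
Variable d : S -> S -> R.

Definition is_metric : Prop :=
  [/\ forall x y, 0 <= d x y,
      forall x y, d x y = 0 <-> x = y,
      forall x y, d x y = d y x &
      forall x y z, d x z <= d x y + d y z].

Definition d_complete : Prop :=
  forall u : nat -> S,
    (forall e : R, 0 < e -> exists N : nat, forall n m : nat,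
        (N <= n)%N -> (N <= m)%N -> d (u n) (u m) < e) ->
    exists x : S, (fun n => d (u n) x) @ \oo --> (0%R : R).

(* the topology sigma of S (sequential convergence u @ \oo --> x) is
   compatible with d *)
Definition compatible : Prop :=
  (forall (u v : nat -> S) (x y : S),
      u @ \oo --> x -> v @ \oo --> y ->
      ((d x y)%:E <= limn_einf (fun n => (d (u n) (v n))%:E))%E) /\
  (forall (u v : nat -> S) (x : S),
      (fun n => d (u n) (v n)) @ \oo --> (0%R : R) ->
      u @ \oo --> x -> v @ \oo --> x).

Local Open Scope ereal_scope.

(* local slope |d phi|(v) = limsup_{w -d-> v} (phi v - phi w)^+ / d(v,w),
   written as inf_{delta>0} sup_{0<d(v,w)<delta}; the value is 0 at
   d-isolated points (0 is included in the sup since the quotients are >= 0).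
   Outside the domain (phi v = +oo) we use the convention +oo. *)
Definition local_slope (phi : S -> \bar R) (v : S) : \bar R :=
  if phi v == +oo then +oo else
  ereal_inf [set ereal_sup ([set 0] `|`
     [set maxe (phi v - phi w) 0 * ((d v w)^-1)%:E
        | w in [set w | (0 < d v w)%R /\ (d v w < delta)%R]])
     | delta in [set delta : R | (0 < delta)%R]].

Definition relaxed_slope (phi : S -> \bar R) (u : S) : \bar R :=
  ereal_inf [set limn_einf (fun n => local_slope phi (un n))
     | un in [set un : nat -> S | un @ \oo --> u /\
         exists C : R, forall n, (d (un n) u <= C)%R /\ phi (un n) <= C%:E]].

Definition yosida (tau : R) (f : S -> \bar R) (u : S) : \bar R :=
  ereal_inf [set f v + ((d v u ^+ 2) / (2 * tau))%:E | v in [set: S]].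

Definition liminf0 (g : R -> \bar R) : \bar R :=
  ereal_sup [set ereal_inf [set g tau | tau in [set tau : R | (0 < tau)%R /\ (tau < delta)%R]]
     | delta in [set delta : R | (0 < delta)%R]].

(* (A1) for the family f (f e is phi_e, for e > 0) *)
Definition A1 (f : R -> S -> \bar R) : Prop :=
  (exists (A B : R) (ustar : S), (0 < A)%R /\ (0 < B)%R /\
     forall e : R, (0 < e)%R -> forall v : S,
       (- A - B * d v ustar ^+ 2)%:E <= f e v) /\
  (forall (en : nat -> R) (un : nat -> S),
     (forall n, (0 < en n)%R) -> en @ \oo --> (0%R : R) ->
     (exists C : R, forall n m, f (en n) (un n) <= C%:E /\ (d (un n) (un m) <= C)%R) ->
     exists (sub : nat -> nat) (u : S),
       {homo sub : n m / (n < m)%N >-> (n < m)%N} /\ (un \o sub) @ \oo --> u).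

Definition A2 (phi : S -> \bar R) (f : R -> S -> \bar R) : Prop :=
  forall (en : nat -> R) (un : nat -> S) (u : S),
    (forall n, (0 < en n)%R) -> en @ \oo --> (0%R : R) ->
    (exists C : R, forall n m, (d (un n) (un m) <= C)%R) ->
    un @ \oo --> u ->
    phi u <= limn_einf (fun n => f (en n) (un n)).

Definition A3 (phi : S -> \bar R) (f : R -> S -> \bar R) (eps : R -> R) : Prop :=
  forall (ut : R -> S) (u : S),
    ut @ 0^'+ --> u ->
    (exists C : R, forall tau : R, (0 < tau)%R ->
        f (eps tau) (ut tau) <= C%:E /\ (d (ut tau) u <= C)%R) ->
    (2^-1)%:E * (relaxed_slope phi u * relaxed_slope phi u)
      <= liminf0 (fun tau =>
           (f (eps tau) (ut tau) - yosida tau (f (eps tau)) (ut tau)) * (tau^-1)%:E).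

Definition ind (V : set S) (u : S) : \bar R := if `[< V u >] then 0 else +oo.

End Defs.

(* Main.v *)
Require Import Defs.
From HB Require Import structures.
From mathcomp Require Import all_boot all_order all_algebra.
From mathcomp Require Import all_classical all_reals all_analysis.
From mathcomp Require Import lra ring.
Import Order.TTheory GRing.Theory Num.Theory numFieldNormedType.Exports.
Local Open Scope classical_set_scope.
Local Open Scope ring_scope.

Lemma le_limn_einf (R : realType) (u v : (\bar R)^nat) :
  (forall n, (u n <= v n)%E) -> (limn_einf u <= limn_einf v)%E.
Proof.
move=> H; rewrite !limn_einf_lim.
apply: lee_lim; [exact: is_cvg_einfs|exact: is_cvg_einfs|].
apply: nearW => n /=.
apply: le_ereal_inf_tmp => _ [k kn <-].
apply: (@le_trans _ _ (u k)); last exact: H.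
by apply: ereal_inf_lbound; exists k.
Qed.

Lemma liminf0_mono (R : realType) (g h : R -> \bar R) (dl : R) : 0 < dl ->
  (forall t, 0 < t -> t < dl -> (h t <= g t)%E) ->
  (liminf0 h <= liminf0 g)%E.
Proof.
move=> d0 H.
apply: ge_ereal_sup => _ [e /= e0 <-].
apply: (@le_trans _ _ (ereal_inf [set g tau | tau in
   [set tau : R | 0 < tau /\ tau < Num.min e dl]])).
  apply: le_ereal_inf_tmp => _ [t [t0 te] <-].
  move: te; rewrite lt_min => /andP[te tdl].
  apply: (@le_trans _ _ (h t)); last exact: H.
  by apply: ereal_inf_lbound; exists t.
apply: ereal_sup_ubound; exists (Num.min e dl) => //=.
by rewrite lt_min e0 d0.
Qed.

Lemma fin_ineq {R : realFieldType} {C A a b c e q m t absC twoB : R} :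
  t <= q -> m = absC + A + e + twoB -> C <= absC -> a <= b -> b <= c + e ->
  m <= c -> t = 2 * c -> 0 < twoB -> C <= - A - a + q.
Proof. move=> *; lra. Qed.

Theorem mainTheorem9 (R : realType) (S : topologicalType) (d : S -> S -> R)
  (phi : S -> \bar R) (f : R -> S -> \bar R) (eps : R -> R) (r : R -> R)
  (ustarstar : S) :
  is_metric d -> d_complete d -> hausdorff_space S -> compatible d ->
  (forall u, phi u != -oo%E) ->
  (forall e u, 0 < e -> f e u != -oo%E) ->
  (forall tau, 0 < tau -> 0 < eps tau) -> eps x @[x --> 0^'+] --> (0%R : R) ->
  A1 d f -> A2 d phi f -> A3 d phi f eps ->
  (forall e, 0 < e -> 0 < r e) ->
  (forall e1 e2, 0 < e1 -> e1 <= e2 -> r e2 <= r e1) ->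
  r x @[x --> 0^'+] --> +oo ->
  let ftilde := fun e u => (f e u + ind [set v | (d ustarstar v <= r e)%R] u)%E in
  A1 d ftilde /\ A2 d phi ftilde /\ A3 d phi ftilde eps.
Proof.
move=> [d0 d00 dsym dtri] hc hH hcomp hphi hf heps heps0
  [[A [B [us [A0 [B0 Hlow]]]]] A1b] hA2 hA3 r0 rmono rinf ftilde.
have L1 : forall e u, (f e u <= ftilde e u)%E.
  move=> e u; rewrite /ftilde /ind; apply: leeDl.
  by case: asboolP.
have L2 : forall e u (C : R), 0 < e -> (ftilde e u <= C%:E)%E ->
    f e u = ftilde e u /\ d ustarstar u <= r e.
  move=> e u C e0; rewrite /ftilde /ind; case: asboolP => hV.
    by rewrite adde0.
  by rewrite addey ?hf.
split.
  split.
    exists A, B, us; split => //; split => // e e0 v.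
    exact: le_trans (Hlow e e0 v) (L1 e v).
  move=> en un Hpos Hcv [C HC]; apply: A1b => //; exists C => n m.
  have [H1 H2] := HC n m; split => //.
  by rewrite (L2 _ _ _ (Hpos n) H1).1.
split.
  move=> en un u Hpos Hcv HC Hu.
  apply: le_trans (hA2 en un u Hpos Hcv HC Hu) _.
  by apply: le_limn_einf => n; exact: L1.
move=> ut u hut [C HC].
have HCf : exists C : R, forall tau : R, 0 < tau ->
    (f (eps tau) (ut tau) <= C%:E)%E /\ d (ut tau) u <= C.
  exists C => tau t0; have [H1 H2] := HC tau t0; split => //.
  exact: le_trans (L1 _ _) H1.
apply: le_trans (hA3 ut u hut HCf) _.
pose D0 := C + d u us.
pose K := d ustarstar u + C.
pose M := (`|C| + A + 2 * B * D0 ^+ 2) / (2 * B) + 1.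
have Hev : \forall tau \near 0^'+, M + K < r (eps tau) /\ 8 * B * tau < 1.
  have := (cvgryPgt r).1 rinf (M + K).
  move=> Hx.
  have /nbhs_ballP[e e0 He] : nbhs (0:R) (fun x => 0 < x -> M + K < r x)
    by exact: Hx.
  near=> tau.
  have tau0 : 0 < tau by near: tau; exact: nbhs_right_gt.
  split.
    apply: He; last exact: heps.
    rewrite /ball /=.
    near: tau; exact: (cvgr_dist_lt _ _ heps0 _ e0).
  have : tau < 1 / (8 * B).
    near: tau; apply: nbhs_right_lt; by rewrite divr_gt0 ?mulr_gt0.
  by rewrite ltr_pdivlMr ?mulr_gt0 // mulrC.
have /nbhs_ballP[dl dl0 Hdl] : nbhs (0:R) (fun x => 0 < x ->
    M + K < r (eps x) /\ 8 * B * x < 1) by exact: Hev.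
have dl0' : 0 < dl by exact: dl0.
apply: (@liminf0_mono _ _ _ _ dl0') => tau t0 tdl.
have [Hr Htau] : M + K < r (eps tau) /\ 8 * B * tau < 1.
  apply: Hdl => //; rewrite /ball /= sub0r normrN ger0_norm //; exact: ltW.
have [H1 H2] := HC tau t0.
have [Hfe Hball] := L2 _ _ _ (heps _ t0) H1.
rewrite Hfe; apply: lee_wpmul2r; first by rewrite lee_fin invr_ge0 ltW.
apply: leeB => //.
rewrite /yosida.
apply: le_ereal_inf_tmp => _ [v _ <-].
have [hv|hv] := leP (d ustarstar v) (r (eps tau)).
  apply: ereal_inf_lbound; exists v => //.
  rewrite /ftilde /ind; case: asboolP => [_|hn]; first by rewrite adde0.
  by exfalso; apply: hn.
apply: ge_ereal_inf; exists (ftilde (eps tau) (ut tau) +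
    ((d (ut tau) (ut tau) ^+ 2) / (2 * tau))%:E)%E.
  by exists (ut tau).
have -> : d (ut tau) (ut tau) = 0 by apply/d00.
rewrite expr0n /= mul0r adde0.
apply: le_trans H1 _.
apply: le_trans (leeD (Hlow _ (heps _ t0) v) (lexx _)).
rewrite -EFinD lee_fin.
set s := d v (ut tau).
set x := d v us.
set D := d (ut tau) us.
have s0 : 0 <= s by apply: d0.
have x0 : 0 <= x by apply: d0.
have D0' : 0 <= D by apply: d0.
have hx : x <= s + D by rewrite /x /s /D; apply: dtri.
have hD : D <= D0.
  rewrite /D /D0; apply: le_trans (dtri _ u _) _; exact: lerD.
have hs : M < s.
  have h1 : d ustarstar v <= d ustarstar (ut tau) + s.
    by rewrite /s [d v _]dsym; apply: dtri.
  have h2 : d ustarstar (ut tau) <= K.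
    rewrite /K; apply: le_trans (dtri _ u _) _; apply: lerD => //; by rewrite dsym.
  lra.
have hq : 4 * B * s ^+ 2 <= s ^+ 2 / (2 * tau).
  rewrite ler_pdivlMr ?mulr_gt0 //.
  have : 0 <= s ^+ 2 by apply: sqr_ge0.
  nra.
have hM : 2 * B * M = `|C| + A + 2 * B * D0 ^+ 2 + 2 * B.
  rewrite /M mulrDr mulr1 mulrCA mulfV ?mulr1 //.
  by rewrite gt_eqF // mulr_gt0.
have hC : C <= `|C| by apply: ler_norm.
have hM1 : 1 <= M.
  have hnum : 0 <= `|C| + A + 2 * B * D0 ^+ 2.
    have := sqr_ge0 D0; have := normr_ge0 C; nra.
  have : 0 <= (`|C| + A + 2 * B * D0 ^+ 2) / (2 * B).
    by apply: divr_ge0 => //; nra.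
  rewrite /M; lra.
have hss : M <= s ^+ 2 by rewrite expr2; nra.
have hx2 : x ^+ 2 <= (s + D0) ^+ 2.
  rewrite ler_sqr ?nnegrE //; first by apply: (le_trans hx); rewrite lerD2l.
  lra.
have e1 : B * x ^+ 2 <= B * (s + D0) ^+ 2 by apply: ler_wpM2l => //; exact: ltW.
have e2 : B * (s + D0) ^+ 2 <= B * (2 * s ^+ 2 + 2 * D0 ^+ 2).
  apply: ler_wpM2l; first exact: ltW.
  have := sqr_ge0 (s - D0); rewrite !expr2; nra.
have e3 : 2 * B * M <= 2 * B * s ^+ 2 by apply: ler_wpM2l => //; rewrite mulr_ge0 // ltW.
have e4 : B * (2 * s ^+ 2 + 2 * D0 ^+ 2) = 2 * B * s ^+ 2 + 2 * B * D0 ^+ 2.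
  by rewrite mulrDr !mulrA [B * 2]mulrC.
have e5 : 4 * B * s ^+ 2 = 2 * (2 * B * s ^+ 2) by ring.
have B2 : 0 < 2 * B by rewrite mulr_gt0.
rewrite e4 in e2.
exact: (fin_ineq hq hM hC e1 e2 e3 e5 B2).
Unshelve. all: end_near.
Qed.
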